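(* Let $X$ be a Tychonoff $\Delta$-space and let $\varphi:X\to Y$ be a quotient continuous surjection onto a Tychonoff space $Y$ such that only finitely many fibers $\varphi^{-1}(y)$, $y\in Y$, have more than one point. Then $Y$ is a $\Delta$-space.
   Context: A topological space $X$ is a $\Delta$-space if for every decreasing sequence $\{D_n:n\in\omega\}$ of subsets of $X$ with $\bigcap_n D_n=\emptyset$ there is a decreasing sequence $\{V_n:n\in\omega\}$ of open subsets of $X$ with $D_n\subseteq V_n$ for all $n$ and $\bigcap_n V_n=\emptyset$. *)

(* Defs.v *)
From HB Require Import structures.
From mathcomp Require Import all_boot all_order all_algebra.
From mathcomp Require Import all_classical all_reals all_analysis.
Set Implicit Arguments. Unset Strict Implicit. Unset Printing Implicit Defensive.
Local Open Scope classical_set_scope.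

Definition delta_space (X : topologicalType) : Prop :=
  forall D : nat -> set X,
    (forall n, D n.+1 `<=` D n) ->
    \bigcap_n D n = set0 ->
    exists V : nat -> set X,
      [/\ forall n, open (V n),
          forall n, V n.+1 `<=` V n,
          forall n, D n `<=` V n &
          \bigcap_n V n = set0].

Definition tychonoff_space (X : topologicalType) : Prop :=
  completely_regular_space X /\ accessible_space X.

Definition quotient_map (X Y : topologicalType) (f : X -> Y) : Prop :=
  [/\ continuous f,
      forall y : Y, exists x : X, f x = y &
      forall U : set Y, open (f @^-1` U) -> open U].

(* Main.v *)
Require Import Defs.
From HB Require Import structures.
From mathcomp Require Import all_boot all_order all_algebra.
From mathcomp Require Import all_classical all_reals all_analysis.
Local Open Scope classical_set_scope.

Theorem proposition5p2 (X Y : topologicalType) (phi : X -> Y) :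
  tychonoff_space X -> delta_space X ->
  tychonoff_space Y ->
  quotient_map phi ->
  finite_set [set y : Y | exists x1 x2 : X,
                 [/\ x1 <> x2, phi x1 = y & phi x2 = y]] ->
  delta_space Y.
Proof.
move=> _ dX [_ T1Y] [phic phis phiq] Ffin D Ddec Dempty.
set F := [set y : Y | exists x1 x2 : X, [/\ x1 <> x2, phi x1 = y & phi x2 = y]].
have E0 : \bigcap_n (phi @^-1` D n) = set0.
  rewrite -subset0 => x Hx; have : (\bigcap_n D n) (phi x) by move=> n _; exact: Hx.
  by rewrite Dempty.
have [W [Wo Wdec DW Wempty]] := dX (fun n => phi @^-1` D n)
  (fun n x => @Ddec n (phi x)) E0.
exists (fun n => [set y | forall x, phi x = y -> W n x]); split.
- move=> n; apply: phiq.
  set B := [set y | F y /\ ~ (forall x, phi x = y -> W n x)].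
  have Bfin : finite_set B by apply: sub_finite_set Ffin => y [].
  have Bc : closed B by exact: (proj1 (@accessible_finite_set_closed Y) T1Y B Bfin).
  have Pc : closed (phi @^-1` B) by apply: preimage_closed => // x _; exact: phic.
  have -> : phi @^-1` [set y | forall x, phi x = y -> W n x] = W n `&` ~` (phi @^-1` B).
    apply/seteqP; split => x /=.
      by move=> H; split; [exact: H|move=> [_ []]].
    move=> [Wx nB] x' ex'.
    have [->|ne] := pselect (x' = x); first by [].
    apply: contra_notP nB => nW; split; first by exists x', x.
    by move=> H; apply: nW; exact: H.
  exact: openI (Wo n) (closed_openC Pc).
- by move=> n y H x /H; exact: Wdec.
- by move=> n y Dy x ex; apply: DW; rewrite /= ex.
- rewrite -subset0 => y Hy; have [x ex] := phis y.
  have : (\bigcap_n W n) x by move=> n _; exact: Hy n I x ex.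
  by rewrite Wempty.
Qed.
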